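(* Let $(L,\vee,\wedge,\to,f,g,0,1)$ be a spatial HGC-algebra. Then there exists a GC-frame $\mathcal{F}=(X,\leq,R)$ such that $(L,\vee,\wedge,\to,f,g,0,1)$ is isomorphic to the complex algebra $\mathbb{H}_{\rm GC}(\mathcal{F})=(\mathcal{T}_\leq,\cup,\cap,\to,{}^\blacktriangle,{}^\blacktriangledown,\emptyset,X)$.
   Context: A pair $(f,g)$ of maps $f,g\colon L\to L$ on a lattice $L$ is an (order-preserving) Galois connection if for all $a,b\in L$: $f(a)\leq b \iff a\leq g(b)$. An HGC-algebra $(L,\vee,\wedge,\to,f,g,0,1)$ is a Heyting algebra $(L,\vee,\wedge,\to,0,1)$ (where $a\to b$ is the greatest $x$ with $a\wedge x\leq b$) equipped with an order-preserving Galois connection $(f,g)$ on $L$. An element $a$ of a complete lattice is completely join-irreducible if $a=\bigvee S$ implies $a\in S$ for every subset $S$; a complete lattice is spatial if every element is the join of the completely join-irreducible elements below it. An HGC-algebra is spatial if its underlying lattice is a spatial (in particular complete) lattice. A GC-frame $(X,\leq,R)$ is a set $X$ with a quasiorder (reflexive, transitive relation) $\leq$ and a binary relation $R\subseteq X\times X$ such that $x\leq x'$, $x\,R\,y$ and $y'\leq y$ imply $x'\,R\,y'$. For a quasiorder $\leq$ on $X$, $\mathcal{T}_\leq$ is the set of all subsets $B\subseteq X$ that are $\leq$-closed upward ($x\in B$, $x\leq y$ imply $y\in B$). For $A\subseteq X$: $A^\blacktriangle=\{x\in X\mid x\,R\,y \text{ for some } y\in A\}$ and $A^\blacktriangledown=\{x\in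 X\mid \text{for all } y,\ y\,R\,x \text{ implies } y\in A\}$. On $\mathcal{T}_\leq$, $A\to B=\{a\in X\mid \text{for all } b\geq a,\ b\in A \text{ implies } b\in B\}$. The complex algebra $\mathbb{H}_{\rm GC}(\mathcal{F})$ is $(\mathcal{T}_\leq,\cup,\cap,\to,{}^\blacktriangle,{}^\blacktriangledown,\emptyset,X)$; isomorphism means an isomorphism preserving $\vee,\wedge,\to,f,g,0,1$ (with $f$ corresponding to ${}^\blacktriangle$ and $g$ to ${}^\blacktriangledown$). *)

(* Defs.v *)
From HB Require Import structures.
From mathcomp Require Import all_boot all_order.
From mathcomp Require Import boolp classical_sets.
Set Implicit Arguments. Unset Strict Implicit. Unset Printing Implicit Defensive.
Import Order.Theory.

Section LatticeDefs.
Context {d : Order.disp_t} {L : tbLatticeType d}.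

Definition heyting_imp (imp : L -> L -> L) : Prop :=
  forall a b : L,
    (Order.meet a (imp a b) <= b)%O /\
    (forall x : L, (Order.meet a x <= b)%O -> (x <= imp a b)%O).

Definition galois_connection (f g : L -> L) : Prop :=
  forall a b : L, (f a <= b)%O <-> (a <= g b)%O.

Definition HGC_algebra (imp : L -> L -> L) (f g : L -> L) : Prop :=
  heyting_imp imp /\ galois_connection f g.

Definition is_join (S : set L) (a : L) : Prop :=
  (forall s, S s -> (s <= a)%O) /\
  (forall u, (forall s, S s -> (s <= u)%O) -> (a <= u)%O).

Definition complete_lattice : Prop :=
  forall S : set L, exists a, is_join S a.

Definition completely_join_irreducible (a : L) : Prop :=
  forall S : set L, is_join S a -> S a.

Definition spatial : Prop :=
  complete_lattice /\
  forall a : L,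
    is_join [set j | completely_join_irreducible j /\ (j <= a)%O] a.

End LatticeDefs.

Section FrameDefs.
Context {X : Type}.

Definition quasiorder (le : X -> X -> Prop) : Prop :=
  (forall x, le x x) /\ (forall x y z, le x y -> le y z -> le x z).

Definition GC_frame (le R : X -> X -> Prop) : Prop :=
  quasiorder le /\
  (forall x x' y y', le x x' -> R x y -> le y' y -> R x' y').

Definition upset (le : X -> X -> Prop) (B : set X) : Prop :=
  forall x y, B x -> le x y -> B y.

Definition up_tri (R : X -> X -> Prop) (A : set X) : set X :=
  [set x | exists y, R x y /\ A y].

Definition down_tri (R : X -> X -> Prop) (A : set X) : set X :=
  [set x | forall y, R y x -> A y].

Definition frame_imp (le : X -> X -> Prop) (A B : set X) : set X :=
  [set a | forall b, le a b -> A b -> B b].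

End FrameDefs.

Definition HGC_iso {d : Order.disp_t} {L : tbLatticeType d} {X : Type}
  (imp : L -> L -> L) (f g : L -> L) (le R : X -> X -> Prop)
  (phi : L -> set X) : Prop :=
  (forall a, upset le (phi a)) /\
  injective phi /\
  (forall B : set X, upset le B -> exists a, phi a = B) /\
  (forall a b, phi (Order.join a b) = setU (phi a) (phi b)) /\
  (forall a b, phi (Order.meet a b) = setI (phi a) (phi b)) /\
  (forall a b, phi (imp a b) = frame_imp le (phi a) (phi b)) /\
  (forall a, phi (f a) = up_tri R (phi a)) /\
  (forall a, phi (g a) = down_tri R (phi a)) /\
  phi Order.bottom = set0 /\
  phi Order.top = setT.

(* Main.v *)
Require Import Defs.
From HB Require Import structures.
From mathcomp Require Import all_boot all_order.
From mathcomp Require Import boolp classical_sets.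
Import Order.Theory.
Local Open Scope order_scope.

Lemma hdist {d : Order.disp_t} {L : tbLatticeType d} {imp : L -> L -> L}
  (Hh : heyting_imp imp) (a : L) {S : set L} {b : L} :
  is_join S b -> is_join (fun y => exists2 s, S s & y = a `&` s) (a `&` b).
Proof.
move=> [Hu Hl]; split.
  by move=> y [s Ss ->]; rewrite lexI leIl /= (le_trans (leIr _ _) (Hu _ Ss)).
move=> u Hu'.
have: b <= imp a u.
  apply: Hl => s Ss; apply: (proj2 (Hh a u)); apply: Hu'; by exists s.
move=> Hb; apply: le_trans (proj1 (Hh a u)).
by rewrite lexI leIl /= (le_trans (leIr _ _) Hb).
Qed.

Lemma keyK {d : Order.disp_t} {L : tbLatticeType d} {imp : L -> L -> L}
  (Hh : heyting_imp imp) {x : L} {S : set L} {b : L} :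
  completely_join_irreducible x -> is_join S b -> x <= b ->
  exists2 s, S s & x <= s.
Proof.
move=> Hx Hj Hxb.
have J := hdist Hh x Hj.
have E : x `&` b = x by apply/meet_idPl.
rewrite E in J.
have [s Ss Es] := Hx _ J.
exists s => //; apply/meet_idPl; by rewrite -Es.
Qed.

Lemma fmono {d : Order.disp_t} {L : tbLatticeType d} {f g : L -> L}
  (Hg : galois_connection f g) {s t : L} : s <= t -> f s <= f t.
Proof.
move=> st; apply/(proj2 (Hg s (f t))).
apply: le_trans st _; exact/(proj1 (Hg t (f t))).
Qed.

Lemma fjoin {d : Order.disp_t} {L : tbLatticeType d} {f g : L -> L}
  (Hg : galois_connection f g) {S : set L} {a : L} :
  is_join S a -> is_join (fun y => exists2 s, S s & y = f s) (f a).
Proof.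
move=> [Hu Hl]; split.
  by move=> y [s Ss ->]; apply: (fmono Hg); apply: Hu.
move=> u Hu'; apply/(proj2 (Hg a u)); apply: Hl => s Ss.
apply/(proj1 (Hg s u)); apply: Hu'; by exists s.
Qed.

Theorem theorem4p2 (d : Order.disp_t) (L : tbLatticeType d)
  (imp : L -> L -> L) (f g : L -> L) :
  HGC_algebra imp f g -> spatial (L := L) ->
  exists (X : Type) (le R : X -> X -> Prop),
    GC_frame le R /\ exists phi : L -> set X, HGC_iso imp f g le R phi.
Proof.
move=> [Hh Hg] [Hc Hsp].
pose X := {j : L | completely_join_irreducible j}.
exists X, (fun x y : X => sval y <= sval x), (fun x y : X => sval x <= f (sval y)).
split.
  split; first split.
  - by move=> x; rewrite le_refl.
  - by move=> x y z H1 H2; apply: le_trans H2 H1.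
  - move=> x x' y y' H1 H2 H3; apply: le_trans H1 _; apply: le_trans H2 _.
    exact: fmono Hg _ _ H3.
exists (fun a => fun x : X => sval x <= a).
have ext : forall (A B : set X), (forall x, A x <-> B x) -> A = B.
  by move=> A B H; apply: funext => x; apply: propext.
split; [|split; [|split; [|split; [|split; [|split; [|split; [|split; [|split]]]]]]]].
- by move=> a x y H1 H2; apply: le_trans H2 H1.
- move=> a b E.
  have H : forall a b : L, ((fun x : X => sval x <= a) : set X) = (fun x : X => sval x <= b) -> a <= b.
    move=> a' b' E'; apply: (proj2 (Hsp a')) => s [Hs sa].
    have := congr1 (fun P => P (exist _ s Hs)) E'; rewrite /= sa => <-; done.
  by apply/le_anti; rewrite (H _ _ E) (H _ _ (esym E)).
- move=> B HB.
  have [a Ha] := Hc (fun j => exists x : X, B x /\ sval x = j).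
  exists a; apply: ext => x; split.
    move=> xa; have [s [y [By <-]] xy] := keyK Hh (svalP x) Ha xa.
    exact: HB _ _ By xy.
  by move=> Bx; apply: (proj1 Ha); exists x.
- move=> a b; apply: ext => x; split.
    move=> xab.
    have Hj : is_join (fun y => y = a \/ y = b) (a `|` b).
      split; first by move=> y [->|->]; rewrite ?leUl ?leUr.
      by move=> u Hu; rewrite leUx (Hu a (or_introl erefl)) (Hu b (or_intror erefl)).
    have [s Hs xs] := keyK Hh (svalP x) Hj xab.
    by case: Hs => Es; subst s; [left|right].
  by case=> H; apply: le_trans H _; rewrite ?leUl ?leUr.
- move=> a b; apply: ext => x; split.
    by rewrite lexI => /andP[].
  by case=> H1 H2; rewrite lexI H1 H2.
- move=> a b; apply: ext => x; split.
    move=> xi y yx ya; apply: le_trans (proj1 (Hh a b)).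
    by rewrite lexI ya (le_trans yx xi).
  move=> H; apply: (proj2 (Hh a b)).
  apply: (proj2 (Hsp (a `&` sval x))) => s [Hs].
  rewrite lexI => /andP[sa sx].
  exact: (H (exist _ s Hs)).
- move=> a; apply: ext => x; split.
    move=> xfa.
    have [t [s [Hs sa] ->] xt] := keyK Hh (svalP x) (fjoin Hg (Hsp a)) xfa.
    by exists (exist _ s Hs).
  case=> y [xy ya]; apply: le_trans xy _; exact: fmono Hg _ _ ya.
- move=> a; apply: ext => x; split.
    move=> xg y yf; apply: le_trans yf _; exact/(proj2 (Hg (sval x) a)).
  move=> H; apply/(proj1 (Hg (sval x) a)).
  apply: (proj2 (Hsp (f (sval x)))) => s [Hs sf].
  exact: (H (exist _ s Hs)).
- apply: ext => x; split => // H.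
  have : is_join set0 (sval x).
    split => // u _; exact: le_trans H (le0x _).
  by move/(svalP x).
- by apply: ext => x; split => // _; rewrite lex1.
Qed.
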